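(* Let $h \geq 1$, $N \geq 1$, and let $d_1 \geq \dots \geq d_N$ and $d_1' \geq \dots \geq d_N'$ be integers in $[0,h]$. Then $P(d_1, \dots, d_N)(x) \geq P(d_1', \dots, d_N')(x)$ for all real $0 \leq x \leq h$ if and only if $d_1' + \dots + d_i' \leq d_1 + \dots + d_i$ for all $1 \leq i \leq N$.
   Context: For integers $d_1, \dots, d_N$ between $0$ and $h$, $P(d_1,\dots,d_N)$ is the function on $[0,h]$ given by $P(d_1, \dots, d_N)(x) = \frac{1}{N} \sum_{i=1}^N \max(0, x + d_i - h)$. *)

(* Defs.v *)
From Stdlib Require Import Reals Lra Lia.
Open Scope R_scope.

Fixpoint sum1 (n : nat) (f : nat -> R) : R :=
  match n with
  | O => 0
  | S m => sum1 m f + f (S m)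
  end.

Fixpoint nsum1 (n : nat) (f : nat -> nat) : nat :=
  match n with
  | O => O
  | S m => (nsum1 m f + f (S m))%nat
  end.

(* P(d_1,...,d_N)(x) = (1/N) * sum_{i=1}^N max(0, x + d_i - h);
   the sequence is given as d : nat -> nat, using the values d 1, ..., d N. *)
Definition P (h N : nat) (d : nat -> nat) (x : R) : R :=
  / INR N * sum1 N (fun i => Rmax 0 (x + INR (d i) - INR h)).

(* Main.v *)
Require Import Defs.
From Stdlib Require Import Reals Lra Lia.
Open Scope R_scope.

Lemma sum1_ext n f g : (forall j, (1 <= j <= n)%nat -> f j = g j) -> sum1 n f = sum1 n g.
Proof. induction n; simpl; intros H; [reflexivity|]. rewrite IHn by (intros; apply H; lia). rewrite (H (S n)) by lia. reflexivity. Qed.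

Lemma sum1_le n f g : (forall j, (1 <= j <= n)%nat -> f j <= g j) -> sum1 n f <= sum1 n g.
Proof. induction n; simpl; intros H; [lra|]. assert (sum1 n f <= sum1 n g) by (apply IHn; intros; apply H; lia).
 assert (f (S n) <= g (S n)) by (apply H; lia). lra. Qed.

Lemma sum1_nonneg_mono k n f : (k <= n)%nat -> (forall j, 0 <= f j) -> sum1 k f <= sum1 n f.
Proof. intros Hk Hf. induction Hk; [lra|]. simpl. specialize (Hf (S m)). lra. Qed.

Lemma sum1_shift k (d : nat -> nat) c : sum1 k (fun j => INR (d j) + c) = INR (nsum1 k d) + INR k * c.
Proof. induction k; cbn [sum1 nsum1]; [simpl; lra|]. rewrite IHk, plus_INR, S_INR. ring. Qed.

Lemma sum1_rmax_ge k n g : (k <= n)%nat -> sum1 k g <= sum1 n (fun j => Rmax 0 (g j)).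
Proof. intros Hk. apply Rle_trans with (sum1 k (fun j => Rmax 0 (g j))).
 - apply sum1_le. intros; apply Rmax_r.
 - apply sum1_nonneg_mono; auto. intros; apply Rmax_l. Qed.

Lemma sum1_rmax_eq k n g : (k <= n)%nat ->
  (forall j, (1 <= j <= k)%nat -> 0 <= g j) -> (forall j, (k < j <= n)%nat -> g j <= 0) ->
  sum1 n (fun j => Rmax 0 (g j)) = sum1 k g.
Proof. intros Hk H1 H2. induction Hk.
 - apply sum1_ext. intros j Hj. apply Rmax_right. auto.
 - simpl. rewrite IHHk by (intros; apply H2; lia). rewrite Rmax_left by (apply H2; lia). ring. Qed.

Lemma split_exists n (g : nat -> R) :
  (forall i j, (1 <= i <= j)%nat -> (j <= n)%nat -> g j <= g i) ->
  exists k, (k <= n)%nat /\ (forall j, (1 <= j <= k)%nat -> 0 <= g j) /\ (forall j, (k < j <= n)%nat -> g j <= 0).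
Proof. induction n; intros Hm.
 - exists 0%nat. split; [lia|split; intros; lia].
 - destruct IHn as [k [Hk [H1 H2]]]. { intros; apply Hm; lia. }
   destruct (Nat.eq_dec k n) as [->|Hne].
   + destruct (Rle_lt_dec 0 (g (S n))).
     * exists (S n). split; [lia|split; intros j Hj]; [|lia].
       destruct (Nat.eq_dec j (S n)); [subst; auto|apply H1; lia].
     * exists n. split; [lia|split; auto]. intros j Hj. assert (j = S n) by lia. subst; lra.
   + exists k. split; [lia|split; auto]. intros j Hj.
     destruct (Nat.eq_dec j (S n)); [|apply H2; lia]. subst.
     apply Rle_trans with (g n). apply Hm; lia. apply H2; lia. Qed.

Theorem mainTheorem2 (h N : nat) (d d' : nat -> nat) :
  (1 <= h)%nat -> (1 <= N)%nat ->
  (forall i, (1 <= i <= N)%nat -> (d i <= h)%nat /\ (d' i <= h)%nat) ->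
  (forall i j, (1 <= i <= j)%nat -> (j <= N)%nat -> (d j <= d i)%nat) ->
  (forall i j, (1 <= i <= j)%nat -> (j <= N)%nat -> (d' j <= d' i)%nat) ->
  ((forall x : R, 0 <= x <= INR h -> P h N d x >= P h N d' x) <->
   (forall i, (1 <= i <= N)%nat -> (nsum1 i d' <= nsum1 i d)%nat)).
Proof.
  intros Hh HN Hb Hd Hd'. unfold P.
  assert (HNpos : 0 < INR N) by (apply lt_0_INR; lia).
  assert (Hinv : 0 < / INR N) by (apply Rinv_0_lt_compat; auto).
  split.
  - intros H i Hi. destruct (Hb i Hi) as [Hdi _].
    assert (Hx : 0 <= INR h - INR (d i) <= INR h).
    { split; [|assert (0 <= INR (d i)) by apply pos_INR; lra].
      assert (INR (d i) <= INR h) by (apply le_INR; auto). lra. }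
    specialize (H _ Hx).
    assert (Hs : sum1 N (fun j => Rmax 0 (INR h - INR (d i) + INR (d j) - INR h)) >=
                 sum1 N (fun j => Rmax 0 (INR h - INR (d i) + INR (d' j) - INR h))).
    { apply Rle_ge, (Rmult_le_reg_l (/ INR N)); lra. }
    clear H.
    rewrite (sum1_rmax_eq i N) in Hs; try lia.
    2:{ intros j Hj. assert (INR (d i) <= INR (d j)) by (apply le_INR, Hd; lia). lra. }
    2:{ intros j Hj. assert (INR (d j) <= INR (d i)) by (apply le_INR, Hd; lia). lra. }
    pose proof (sum1_rmax_ge i N (fun j => INR h - INR (d i) + INR (d' j) - INR h) ltac:(lia)) as Hge.
    simpl in Hge.
    rewrite (sum1_ext i (fun j => INR h - INR (d i) + INR (d j) - INR h) (fun j => INR (d j) + - INR (d i))) in Hs by (intros; ring).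
    rewrite (sum1_ext i (fun j => INR h - INR (d i) + INR (d' j) - INR h) (fun j => INR (d' j) + - INR (d i))) in Hge by (intros; ring).
    rewrite !sum1_shift in *.
    apply INR_le. lra.
  - intros H x Hx.
    assert (Hall : forall k, (k <= N)%nat -> (nsum1 k d' <= nsum1 k d)%nat).
    { intros k Hk. destruct k; [simpl; lia|]. apply H; lia. }
    apply Rle_ge, Rmult_le_compat_l; [lra|].
    destruct (split_exists N (fun j => x + INR (d' j) - INR h)) as [k [Hk [H1 H2]]].
    { intros i j Hij HjN. assert (INR (d' j) <= INR (d' i)) by (apply le_INR, Hd'; lia). lra. }
    rewrite (sum1_rmax_eq k N) by auto.
    eapply Rle_trans; [|apply (sum1_rmax_ge k N (fun j => x + INR (d j) - INR h) Hk)].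
    rewrite (sum1_ext k (fun j => x + INR (d j) - INR h) (fun j => INR (d j) + (x - INR h))) by (intros; ring).
    rewrite (sum1_ext k (fun j => x + INR (d' j) - INR h) (fun j => INR (d' j) + (x - INR h))) by (intros; ring).
    rewrite !sum1_shift.
    assert (INR (nsum1 k d') <= INR (nsum1 k d)) by (apply le_INR, Hall; auto). lra.
Qed.
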